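(* Let $(Y,D)$ be a pair of binary random variables with probability mass function $q_{ij}=\mathbb P(Y=i,D=j)$, $i,j\in\{0,1\}$. Then the following hold. (1) (Validity.) Suppose $(Y_0,Y_1)$ is a pair of $\{0,1\}$-valued random variables defined jointly with $(Y,D)$ such that $(Y,D,Y_0,Y_1)$ satisfies the binary Roy model, or such that there exist real random variables $(Y_0^\ast,Y_1^\ast)$ with $(Y,D,Y_0^\ast,Y_1^\ast)$ satisfying the alternative binary Roy model with $Y_d=1\{Y_d^\ast>0\}$. Then $$0\le \mathbb P(Y_0=1,Y_1=0)\le q_{10},\qquad 0\le \mathbb P(Y_0=0,Y_1=1)\le q_{11},\qquad \mathbb P(Y_0=0,Y_1=0)=q_{00}+q_{01}.$$ (2) (Sharpness.) Conversely, if $(p_{00},p_{01},p_{10})\in\mathbb R^3$ satisfies $0\le p_{10}\le q_{10}$, $0\le p_{01}\le q_{11}$ and $p_{00}=q_{00}+q_{01}$, then there exist, on some probability space, random variables $(\tilde Y,\tilde D,Y_0,Y_1)$ with $(\tilde Y,\tilde D)$ having the same distribution as $(Y,D)$, $Y_0,Y_1\in\{0,1\}$, such that $(\tilde Y,\tilde D,Y_0,Y_1)$ satisfies the binary Roy model (and hence also the alternative binary Roy model, with $Y_d^\ast=Y_d$) and $\mathbb P(Y_0=0,Y_1=0)=p_{00}$, $\mathbb P(Y_0=0,Y_1=1)=p_{01}$, $\mathbb P(Y_0=1,Y_1=0)=p_{10}$.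
   Context: All random variables are defined on a common probability space. The observed variables are an outcome $Y$ and a sector indicator $D\in\{0,1\}$; $(Y_0,Y_1)$ are unobserved potential outcomes. Binary Roy model: $Y_0,Y_1\in\{0,1\}$, $Y=Y_1D+Y_0(1-D)$, and almost surely $Y_1>Y_0\Rightarrow D=1$ and $Y_1<Y_0\Rightarrow D=0$ (nothing is assumed about $D$ when $Y_1=Y_0$). Alternative binary Roy model: $Y=Y_1D+Y_0(1-D)$ where $Y_d=1\{Y_d^\ast>0\}$ for $d=0,1$, for a pair of real random variables $(Y_0^\ast,Y_1^\ast)$ (possibly dependent), and almost surely $Y_1^\ast>Y_0^\ast\Rightarrow D=1$ and $Y_1^\ast<Y_0^\ast\Rightarrow D=0$. *)

(* Defs.v *)
From HB Require Import structures.
From mathcomp Require Import all_boot all_order all_algebra.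
From mathcomp Require Import all_classical all_reals all_analysis.
Set Implicit Arguments. Unset Strict Implicit. Unset Printing Implicit Defensive.
Import Order.TTheory GRing.Theory Num.Theory.
Local Open Scope classical_set_scope.
Local Open Scope ring_scope.

(* Binary variables are encoded as bool (false = 0, true = 1); the coercion
   nat_of_bool gives the numerical value used in Y = Y1 D + Y0 (1 - D). *)

Definition binary_roy {d} {T : measurableType d} {R : realType}
  (P : probability T R) (Y D Y0 Y1 : T -> bool) : Prop :=
  (forall t, (Y t : nat) = (Y1 t * D t + Y0 t * (1 - D t))%N) /\
  {ae P, forall t, ((Y0 t < Y1 t)%N -> D t = true) /\
                   ((Y1 t < Y0 t)%N -> D t = false)}.

Definition alt_binary_roy {d} {T : measurableType d} {R : realType}
  (P : probability T R) (Y D Y0 Y1 : T -> bool) (Y0s Y1s : T -> R) : Prop :=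
  (forall t, Y0 t = (0 < Y0s t)) /\ (forall t, Y1 t = (0 < Y1s t)) /\
  (forall t, (Y t : nat) = (Y1 t * D t + Y0 t * (1 - D t))%N) /\
  {ae P, forall t, (Y0s t < Y1s t -> D t = true) /\
                   (Y1s t < Y0s t -> D t = false)}.

Definition pmf2 {d} {T : measurableType d} {R : realType}
  (P : probability T R) (X Z : T -> bool) (i j : bool) : \bar R :=
  P [set t | X t = i /\ Z t = j].

(* Main.v *)
Require Import Defs.
From HB Require Import structures.
From mathcomp Require Import all_boot all_order all_algebra.
From mathcomp Require Import all_classical all_reals all_analysis.
From mathcomp Require Import lra.
Import Order.TTheory GRing.Theory Num.Theory.
Local Open Scope classical_set_scope.
Local Open Scope ring_scope.
Local Open Scope ereal_scope.

Set Implicit Arguments. Unset Strict Implicit.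

Lemma mset2 d (T : measurableType d) (X Z : T -> bool) (i j : bool) :
  measurable_fun setT X -> measurable_fun setT Z ->
  measurable [set t | X t = i /\ Z t = j].
Proof.
move=> mX mZ.
have -> : [set t | X t = i /\ Z t = j] =
  (setT `&` X @^-1` [set i]) `&` (setT `&` Z @^-1` [set j]).
  by apply/seteqP; split => t /=; [case=> -> ->| case=> [[_ ->] [_ ->]]].
by apply: measurableI; [exact: mX | exact: mZ].
Qed.

Lemma le_ae d (T : measurableType d) (R : realType) (P : probability T R)
  (A B : set T) (Q : T -> Prop) :
  measurable A -> measurable B -> {ae P, forall t, Q t} ->
  (forall t, A t -> Q t -> B t) -> P A <= P B.
Proof.
move=> mA mB [N [mN PN0 sN]] H.
apply: (@le_trans _ _ (P (B `|` N))).
  apply: le_measure; rewrite ?inE //; first exact: measurableU.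
  move=> t At; have [Qt|nQt] := pselect (Q t); first by left; exact: H.
  by right; apply: sN.
apply: (le_trans (measureU2 P mB mN)).
by rewrite [X in _ + X](_ : _ = 0) ?adde0.
Qed.

Lemma split2 d (T : measurableType d) (R : realType) (P : probability T R)
  (X Z : T -> bool) (i : bool) :
  measurable_fun setT X -> measurable_fun setT Z ->
  P [set t | X t = i] = pmf2 P X Z i false + pmf2 P X Z i true.
Proof.
move=> mX mZ; rewrite /pmf2 -measureU; last 3 first.
- exact: mset2. - exact: mset2.
- by apply/seteqP; split => t //= [[_ ->] [_]].
congr (P _); apply/seteqP; split => t /=.
  by move=> ->; case: (Z t); [right|left].
by case=> -[].
Qed.

Lemma part1 d (T : measurableType d) (R : realType) (P : probability T R)
  (Y D Y0 Y1 : T -> bool) (Q : T -> Prop) :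
  measurable_fun setT Y -> measurable_fun setT D ->
  measurable_fun setT Y0 -> measurable_fun setT Y1 ->
  (forall t, (Y t : nat) = (Y1 t * D t + Y0 t * (1 - D t))%N) ->
  {ae P, forall t, Q t} ->
  (forall t, Q t -> ((Y0 t < Y1 t)%N -> D t = true) /\ ((Y1 t < Y0 t)%N -> D t = false)) ->
     (0 <= pmf2 P Y0 Y1 true false /\ pmf2 P Y0 Y1 true false <= pmf2 P Y D true false) /\
     (0 <= pmf2 P Y0 Y1 false true /\ pmf2 P Y0 Y1 false true <= pmf2 P Y D true true) /\
     pmf2 P Y0 Y1 false false = pmf2 P Y D false false + pmf2 P Y D false true.
Proof.
move=> mY mD mY0 mY1 Hy Hae Himp.
split; [split|split; [split|]].
- exact: measure_ge0.
- apply: (@le_ae _ _ _ P _ _ Q _ _ Hae); try exact: mset2.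
  move=> t [h0 h1] /Himp [_ H2] /=; move: (Hy t) (H2); rewrite h0 h1.
  by case: (Y t); case: (D t) => //= _ /(_ erefl).
- exact: measure_ge0.
- apply: (@le_ae _ _ _ P _ _ Q _ _ Hae); try exact: mset2.
  move=> t [h0 h1] /Himp [H2 _] /=; move: (Hy t) (H2); rewrite h0 h1.
  by case: (Y t); case: (D t) => //= _ /(_ erefl).
- have mY' : measurable [set t | Y t = false].
    have -> : [set t | Y t = false] = setT `&` Y @^-1` [set false] by rewrite setTI.
    exact: mY.
  rewrite -split2 //; apply/eqP; rewrite eq_le; apply/andP; split.
  + apply: le_measure; rewrite ?inE //; first exact: mset2.
    by move=> t [h0 h1] /=; move: (Hy t); rewrite h0 h1; case: (Y t); case: (D t).
  + apply: (@le_ae _ _ _ P _ _ Q _ _ Hae); [exact: mY'|exact: mset2|].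
    move=> t /= h /Himp [H1 H2]; move: (Hy t) H1 H2; rewrite h.
    by case: (Y0 t); case: (Y1 t); case: (D t) => //= _; [move=> _ /(_ erefl)|move=> /(_ erefl)].
Qed.

Definition Dn (k : nat) : bool := odd k./2./2.
Definition Y0n (k : nat) : bool := odd k./2.
Definition Y1n (k : nat) : bool := odd k.
Definition Ytn (k : nat) : bool := if Dn k then Y1n k else Y0n k.

Definition wmeas (R : realType) (r : nat -> R) : {measure set nat -> \bar R} :=
  msum (fun k => mscale (NngNum (normr_ge0 (r k))) \d_k) 8.

Lemma wmeasE (R : realType) (r : nat -> R) A :
  wmeas r A = (\sum_(k < 8) `|r k| * ((k : nat) \in A)%:R)%:E.
Proof.
rewrite /wmeas /msum -sumEFin; apply: eq_bigr => k _.
transitivity ((`|r k|)%:E * \d_(k : nat) A); first by [].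
by rewrite diracE EFinM.
Qed.

Definition Pn (R : realType) (r : nat -> R) : probability nat R :=
  mnormalize (wmeas r) \d_0%N.

Lemma PnE (R : realType) (r : nat -> R) A :
  (\sum_(k < 8) `|r k| = 1)%R -> Pn r A = wmeas r A.
Proof.
move=> H1; transitivity (mnormalize (wmeas r) \d_0%N A); first by [].
have H : wmeas r setT = 1.
  rewrite wmeasE; congr EFin; rewrite -[RHS]H1; apply: eq_bigr => k _.
  by rewrite mem_set //= mulr1n mulr1.
rewrite /mnormalize H.
case: ifPn => [/orP[/eqP|/eqP]//|_].
  by move=> /(congr1 fine) /= /eqP; rewrite oner_eq0.
by rewrite /= invr1 mule1.
Qed.

Lemma memE (X Z : nat -> bool) (i j : bool) (k : nat) :
  (k \in [set t | X t = i /\ Z t = j]) = (X k == i) && (Z k == j).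
Proof.
apply/idP/andP; rewrite inE /=.
  by case=> -> ->.
by case=> /eqP -> /eqP ->.
Qed.

Lemma pmfPn (R : realType) (r : nat -> R) X Z i j :
  (\sum_(k < 8) `|r k| = 1)%R ->
  pmf2 (Pn r) X Z i j = (\sum_(k < 8) `|r k| * ((X k == i) && (Z k == j))%:R)%:E.
Proof.
by move=> H; rewrite /pmf2 PnE // wmeasE; under eq_bigr do rewrite memE.
Qed.

Definition rw (R : realType) (q00 q01 q10 q11 p01 p10 : R) (k : nat) : R :=
  match k with
  | 0 => q00 | 2 => p10 | 3 => q10 - p10 | 4 => q01 | 5 => p01 | 7 => q11 - p01
  | _ => 0 end.

Lemma part2 (R : realType) (q00 q01 q10 q11 p00 p01 p10 : R) :
  (0 <= q00)%R -> (0 <= q01)%R -> (0 <= p10 <= q10)%R -> (0 <= p01 <= q11)%R ->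
  (q00 + q01 + q10 + q11 = 1)%R -> p00 = (q00 + q01)%R ->
  [/\ pmf2 (Pn (rw q00 q01 q10 q11 p01 p10)) Ytn Dn false false = q00%:E, pmf2 (Pn (rw q00 q01 q10 q11 p01 p10)) Ytn Dn false true = q01%:E,
      pmf2 (Pn (rw q00 q01 q10 q11 p01 p10)) Ytn Dn true false = q10%:E & pmf2 (Pn (rw q00 q01 q10 q11 p01 p10)) Ytn Dn true true = q11%:E] /\
  [/\ pmf2 (Pn (rw q00 q01 q10 q11 p01 p10)) Y0n Y1n false false = p00%:E,
      pmf2 (Pn (rw q00 q01 q10 q11 p01 p10)) Y0n Y1n false true = p01%:E &
      pmf2 (Pn (rw q00 q01 q10 q11 p01 p10)) Y0n Y1n true false = p10%:E] /\
  {ae (Pn (rw q00 q01 q10 q11 p01 p10)), forall t, ((Y0n t < Y1n t)%N -> Dn t = true) /\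
                   ((Y1n t < Y0n t)%N -> Dn t = false)}.
Proof.
move=> h00 h01 /andP[h10 h10'] /andP[h01' h11] hs hp.
set P' := Pn (rw q00 q01 q10 q11 p01 p10).
set r := rw q00 q01 q10 q11 p01 p10.
have rpos k : (0 <= r k)%R.
  by case: k => [|[|[|[|[|[|[|[|k]]]]]]]] //=; rewrite ?subr_ge0.
have habs k : `|r k|%R = r k by rewrite ger0_norm.
have hsum : (\sum_(k < 8) `|r k| = 1)%R.
  under eq_bigr do rewrite habs.
  rewrite !big_ord_recr big_ord0 /= -hs.
  rewrite /r /rw /=; lra.
have pm X Z i j : pmf2 P' X Z i j =
    (\sum_(k < 8) r k * ((X k == i) && (Z k == j))%:R)%:E.
  by rewrite pmfPn //; under eq_bigr do rewrite habs.
split; [|split].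
- rewrite !pm !big_ord_recr !big_ord0 /= /r /rw /Ytn /Dn /Y0n /Y1n /=.
  split; congr EFin; lra.
- rewrite !pm !big_ord_recr !big_ord0 /= /r /rw /Ytn /Dn /Y0n /Y1n /= hp.
  split; congr EFin; lra.
- exists (~` [set t | ((Y0n t < Y1n t)%N -> Dn t = true) /\
                   ((Y1n t < Y0n t)%N -> Dn t = false)]); split => //.
  rewrite PnE // wmeasE; congr EFin; apply: big1 => -[k hk] _ /=.
  move: hk; case: k => [|[|[|[|[|[|[|[|k]]]]]]]] //= _;
    rewrite ?normr0 ?mul0r // memNset ?mulr0 //= => -[]; split => //.
Qed.

Unset Implicit Arguments.

Theorem theorem1 (R : realType) (d : measure_display) (T : measurableType d)
  (P : probability T R) (Y D : T -> bool)
  (mY : measurable_fun setT Y) (mD : measurable_fun setT D) :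
  (* (1) validity *)
  (forall Y0 Y1 : T -> bool,
     measurable_fun setT Y0 -> measurable_fun setT Y1 ->
     (binary_roy P Y D Y0 Y1 \/
      exists Y0s Y1s : T -> R,
        measurable_fun setT Y0s /\ measurable_fun setT Y1s /\
        alt_binary_roy P Y D Y0 Y1 Y0s Y1s) ->
     (0 <= pmf2 P Y0 Y1 true false /\ pmf2 P Y0 Y1 true false <= pmf2 P Y D true false) /\
     (0 <= pmf2 P Y0 Y1 false true /\ pmf2 P Y0 Y1 false true <= pmf2 P Y D true true) /\
     pmf2 P Y0 Y1 false false = pmf2 P Y D false false + pmf2 P Y D false true)
  /\
  (* (2) sharpness *)
  (forall p00 p01 p10 : R,
     (0 <= p10%:E /\ p10%:E <= pmf2 P Y D true false) ->
     (0 <= p01%:E /\ p01%:E <= pmf2 P Y D true true) ->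
     p00%:E = pmf2 P Y D false false + pmf2 P Y D false true ->
     exists (d' : measure_display) (T' : measurableType d') (P' : probability T' R)
            (Yt Dt Y0 Y1 : T' -> bool),
       [/\ measurable_fun setT Yt, measurable_fun setT Dt,
           measurable_fun setT Y0 & measurable_fun setT Y1] /\
       (forall i j : bool, pmf2 P' Yt Dt i j = pmf2 P Y D i j) /\
       binary_roy P' Yt Dt Y0 Y1 /\
       (exists Y0s Y1s : T' -> R,
          measurable_fun setT Y0s /\ measurable_fun setT Y1s /\
          (forall t, Y0s t = (Y0 t)%:R /\ Y1s t = (Y1 t)%:R) /\
          alt_binary_roy P' Yt Dt Y0 Y1 Y0s Y1s) /\
       [/\ pmf2 P' Y0 Y1 false false = p00%:E,
           pmf2 P' Y0 Y1 false true = p01%:E &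
           pmf2 P' Y0 Y1 true false = p10%:E]).
Proof.
split.
- move=> Y0 Y1 mY0 mY1 [[Hy Hae]|[Y0s [Y1s [_ [_ [h0 [h1 [Hy Hae]]]]]]]].
    exact: (part1 mY mD mY0 mY1 Hy Hae (fun t x => x)).
  apply: (part1 mY mD mY0 mY1 Hy Hae) => t [c1 c2]; rewrite h0 h1; split.
    case E0: (0 < Y0s t)%R; case E1: (0 < Y1s t)%R => //= _; apply: c1.
    by rewrite (le_lt_trans _ E1) // leNgt E0.
  case E0: (0 < Y0s t)%R; case E1: (0 < Y1s t)%R => //= _; apply: c2.
  by rewrite (le_lt_trans _ E0) // leNgt E1.
- move=> p00 p01 p10 [h10 h10'] [h01 h11] hp.
  set q := fun i j => fine (pmf2 P Y D i j).
  have mS i j : measurable [set t | Y t = i /\ D t = j] by exact: mset2.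
  have fin i j : pmf2 P Y D i j = (q i j)%:E.
    rewrite /q fineK // ge0_fin_numE ?measure_ge0 //.
    exact: (le_lt_trans (probability_le1 P (mS i j)) (ltry 1%R)).
  have qpos i j : (0 <= q i j)%R by rewrite -lee_fin -fin measure_ge0.
  have mY1 i : measurable [set t | Y t = i].
    have -> : [set t | Y t = i] = setT `&` Y @^-1` [set i] by rewrite setTI.
    exact: mY.
  have hs : (q false false + q false true + q true false + q true true = 1)%R.
    apply: EFin_inj; rewrite !EFinD -!fin -(probability_setT P).
    rewrite -addeA -!split2 //.
    rewrite -measureU //; last by apply/seteqP; split => t //= [->].
    by congr (P _); apply/seteqP; split => t //= _; case: (Y t); [right|left].
  rewrite fin lee_fin in h10'; rewrite fin lee_fin in h11.
  rewrite lee_fin in h10; rewrite lee_fin in h01.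
  rewrite !fin -EFinD in hp; have hp2 := EFin_inj hp.
  have H10 : (0 <= p10 <= q true false)%R by rewrite h10 h10'.
  have H01 : (0 <= p01 <= q true true)%R by rewrite h01 h11.
  have H2 := part2 (qpos false false) (qpos false true) H10 H01 hs hp2.
  case: H2 => [[e1 e2 e3 e4] [[f1 f2 f3] hae]].
  have mnat (U : measurableType default_measure_display) (f : nat -> U) :
    measurable_fun setT f by move=> _ B _.
  exists default_measure_display, nat, (Pn (rw (q false false) (q false true)
    (q true false) (q true true) p01 p10)), Ytn, Dn, Y0n, Y1n.
  split; first by split; apply: mnat.
  split; first by move=> [] []; rewrite fin.
  split.
    split => //; move=> t; rewrite /Ytn.
    by case: (Dn t); case: (Y0n t); case: (Y1n t).
  split; last by split.
  exists (fun t => (Y0n t)%:R%R), (fun t => (Y1n t)%:R%R).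
  split; first exact: mnat.
  split; first exact: mnat.
  split; first by [].
  split; first by move=> t; rewrite ltr0n; case: (Y0n t).
  split; first by move=> t; rewrite ltr0n; case: (Y1n t).
  split.
    by move=> t; rewrite /Ytn; case: (Dn t); case: (Y0n t); case: (Y1n t).
  case: hae => N [mN PN sN]; exists N; split => // t /= nq; apply: sN => /= -[c1 c2].
  by apply: nq; rewrite !ltr_nat; split.
Qed.
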